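(* Let $d\ge1$ and $\lambda=(\lambda_1,\dots,\lambda_d)$ a vector of positive integers with $\sum_t\lambda_t=n\ge2$. For distinct $i,j\in\{0,\dots,n-2\}$, we have $i\preceq j$ in $P(\lambda)$ if and only if $i<j$ and for every $t\in\{1,\dots,d\}$, \[ \frac{s_{t,i}+s_{t,j-i}-s_{t,j}}{n-1}=\left\lceil \frac{s_{t,i}}{n-1}\right\rceil + \left\lceil \frac{s_{t,j-i}}{n-1}\right\rceil - \left\lceil \frac{s_{t,j}}{n-1}\right\rceil . \]
   Context: $\Delta_\lambda=\mathrm{conv}(e_1,\dots,e_d,\lambda)\subset\mathbb{R}^d$, with fundamental parallelepiped $\Pi_\lambda=\{\sum_{i=1}^d\gamma_i(1,e_i)+\gamma_{d+1}(1,\lambda):0\le\gamma_i<1\}\subset\mathbb{R}^{d+1}$. $P(\lambda)$ is $\Pi_\lambda\cap\mathbb{Z}^{d+1}$ ordered by $\sigma\preceq\mu$ iff $\mu-\sigma\in\Pi_\lambda\cap\mathbb{Z}^{d+1}$. For $0\le b<n-1$ set $p(b)=\left(\sum_{t}\lceil b\lambda_t/(n-1)\rceil-b,\ \lceil b\lambda_1/(n-1)\rceil,\dots,\lceil b\lambda_d/(n-1)\rceil\right)$; $b\mapsto p(b)$ is a bijection from $\{0,\dots,n-2\}$ onto $\Pi_\lambda\cap\mathbb{Z}^{d+1}$ and each integer $b$ is identified with $p(b)$. For $0\le i<n-1$ and $1\le t\le d$, the integers $r_{t,i}\ge0$ and $0\le s_{t,i}<n-1$ are defined by $i\lambda_t=r_{t,i}(n-1)+s_{t,i}$.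 *)

(* Defs.v *)
From HB Require Import structures.
From mathcomp Require Import all_boot all_order all_algebra.
From mathcomp Require Import reals.
Set Implicit Arguments. Unset Strict Implicit. Unset Printing Implicit Defensive.
Import Order.TTheory GRing.Theory Num.Theory.
Local Open Scope ring_scope.

(* lambda is given as lam : 'I_d -> nat, lam t = lambda_{t+1}. *)
Definition nlam (d : nat) (lam : 'I_d -> nat) : nat := (\sum_(t < d) lam t)%N.

(* A point of R^{d+1} is written as a pair (x0, x) with x0 the first
   coordinate and x t the coordinate corresponding to e_{t+1}. *)
Definition in_Pi (R : realType) (d : nat) (lam : 'I_d -> nat)
    (x0 : R) (x : 'I_d -> R) : Prop :=
  exists (gam : 'I_d -> R) (g : R),
    (forall t, 0 <= gam t < 1) /\ (0 <= g < 1) /\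
    x0 = \sum_(t < d) gam t + g /\
    (forall t, x t = gam t + g * (lam t)%:R).

Definition ceilq (a m : nat) : int := Num.ceil ((a%:R / m%:R) : rat).

Definition p0 (d : nat) (lam : 'I_d -> nat) (b : nat) : int :=
  \sum_(t < d) ceilq (b * lam t) (nlam lam).-1 - b%:Z.
Definition pc (d : nat) (lam : 'I_d -> nat) (b : nat) (t : 'I_d) : int :=
  ceilq (b * lam t) (nlam lam).-1.

(* i ⪯ j in P(lambda): p(j) - p(i) lies in Pi_lambda ∩ Z^{d+1}
   (the difference is automatically an integer point). *)
Definition preceq (R : realType) (d : nat) (lam : 'I_d -> nat) (i j : nat) : Prop :=
  in_Pi lam ((p0 lam j - p0 lam i)%:~R : R)
            (fun t => ((pc lam j t - pc lam i t)%:~R : R)).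

Definition s_ (d : nat) (lam : 'I_d -> nat) (t : 'I_d) (i : nat) : nat :=
  ((i * lam t) %% (nlam lam).-1)%N.

(* Main.v *)
Require Import Defs.
From HB Require Import structures.
From mathcomp Require Import all_boot all_order all_algebra.
From mathcomp Require Import reals.
From mathcomp Require Import zify ring lra.
Import Order.TTheory GRing.Theory Num.Theory.
Local Open Scope ring_scope.
Lemma ceil_int_aux (m e r : int) : 0 < m -> 0 <= r < m ->
  m * (e - 1) < r <= m * e -> e = ((r != 0) : nat)%:Z.
Proof.
move=> hm /andP[h1 h2] /andP[h3 h4].
have [rn|rn0] := eqVneq r 0; simpl.
  subst r; have : e <= 0 by nia. have : 0 <= e by nia. lia.
have : e <= 1 by nia. have : 1 <= e by nia. lia.
Qed.

Lemma bval (s b : int) : (s == 0) = (b == 0) -> 0 <= b <= 1 -> 0 <= s ->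
  (s = 0 /\ b = 0) \/ (1 <= s /\ b = 1).
Proof.
have [->|sn] := eqVneq s 0; have [->|bn] := eqVneq b 0 => //= _; try lia.
Qed.

Lemma core (m ri si rk sk rj sj : int) (bi bk bj : int) :
  0 < m -> 0 <= si < m -> 0 <= sk < m -> 0 <= sj < m ->
  (si == 0) = (bi == 0) -> (sk == 0) = (bk == 0) -> (sj == 0) = (bj == 0) ->
  0 <= bi <= 1 -> 0 <= bk <= 1 -> 0 <= bj <= 1 ->
  rj * m + sj = ri * m + si + (rk * m + sk) ->
  (0 <= m * (rj + bj - (ri + bi)) - (rk * m + sk) < m) <->
  (si + sk - sj = (bi + bk - bj) * m).
Proof.
move=> hm hi hk hj ei ek ej bbi bbk bbj he.
have ED : (rj - ri - rk) * m = si + sk - sj by lia.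
have hD0 : 0 <= rj - ri - rk by nia.
have hD1 : rj - ri - rk <= 1 by nia.
have E1 : m * (rj + bj - (ri + bi)) - (rk * m + sk) =
  (rj - ri - rk) * m + (bj - bi) * m - sk by ring.
rewrite E1 -ED.
have [hD|hD] : rj - ri - rk = 0 \/ rj - ri - rk = 1 by lia.
all: rewrite hD.
all: have [[? ->]|[? ->]] := @bval si bi ei bbi ltac:(lia).
all: have [[? ->]|[? ->]] := @bval sk bk ek bbk ltac:(lia).
all: have [[? ->]|[? ->]] := @bval sj bj ej bbj ltac:(lia).
all: split; lia.
Qed.

Lemma ceilq_E (x m : nat) : (0 < m)%N ->
  Num.ceil ((x%:R / m%:R) : rat) = (x %/ m)%:Z + ((x %% m != 0)%N : nat)%:Z.
Proof.
move=> hm.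
have := ceil_itv ((x%:R / m%:R) : rat).
set c := Num.ceil _ => /andP[h1 h2].
have hm' : (0 : rat) < m%:R by rewrite ltr0n.
rewrite ltr_pdivlMr // in h1; rewrite ler_pdivrMr // in h2.
have e1 : forall n : nat, (n%:R : rat) = (n%:Z)%:~R by move=> n; rewrite pmulrn.
rewrite !e1 -intrM ltr_int in h1.
rewrite !e1 -intrM ler_int in h2.
have hx := divn_eq x m.
have hr := ltn_pmod x hm.
have -> : c = (c - (x %/ m)%:Z) + (x %/ m)%:Z by ring.
rewrite addrC; congr (_ + _).
have -> : (x %% m != 0)%N = ((x %% m)%:Z != 0) by [].
apply: (@ceil_int_aux m%:Z); first by lia.
  by apply/andP; split; lia.
apply/andP; split; nia.
Qed.

Lemma bz (n : nat) : (n%:Z == 0) = ((((n != 0)%N) : nat)%:Z == 0).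
Proof. by case: n. Qed.

Lemma ceilq_small (s M : nat) : (0 < M)%N -> (s < M)%N ->
  Num.ceil ((s%:R / M%:R) : rat) = ((s != 0)%N : nat)%:Z.
Proof. by move=> hM hs; rewrite ceilq_E // divn_small // modn_small. Qed.

Lemma pert (M a i j : nat) : (0 < M)%N -> (i < j)%N ->
 (0 <= M%:Z * (Num.ceil (((j*a)%N%:R / M%:R) : rat) - Num.ceil (((i*a)%N%:R / M%:R) : rat))
      - ((j-i)%N : nat)%:Z * a%:Z < M%:Z) <->
 ( ((i*a %% M)%N%:Z + ((j-i)*a %% M)%N%:Z - ((j*a) %% M)%N%:Z) =
   (Num.ceil ((((i*a)%%M)%N%:R / M%:R) : rat) + Num.ceil (((((j-i)*a)%%M)%N%:R / M%:R) : rat)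
    - Num.ceil ((((j*a)%%M)%N%:R / M%:R) : rat)) * M%:Z ).
Proof.
move=> hM hij.
rewrite !ceilq_E // !modn_mod !(divn_small (ltn_pmod _ hM)).
have hi := divn_eq (i * a) M.
have hj := divn_eq (j * a) M.
have hk := divn_eq ((j - i) * a) M.
have hji : ((j - i) * a = j * a - i * a)%N by rewrite mulnBl.
have hle : (i * a <= j * a)%N by rewrite leq_mul2r ltnW ?orbT.
have -> : ((j-i)%N : nat)%:Z * a%:Z = ((j - i) * a)%N%:Z by [].
move: hi hj hk hji hle.
have := ltn_pmod (i * a) hM; have := ltn_pmod (j * a) hM; have := ltn_pmod ((j - i) * a) hM.
set A := (i * a)%N; set B := (j * a)%N; set C := ((j - i) * a)%N.
set qi := (A %/ M)%N; set qj := (B %/ M)%N; set qk := (C %/ M)%N.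
set si := (A %% M)%N; set sj := (B %% M)%N; set sk := (C %% M)%N.
move=> lk lj li hi hj hk hji hle.
rewrite hk.
have := @core M%:Z qi%:Z si%:Z qk%:Z sk%:Z qj%:Z sj%:Z
  ((si != 0)%N : nat)%:Z ((sk != 0)%N : nat)%:Z ((sj != 0)%N : nat)%:Z.
move=> H; rewrite -H.
- have -> : (qk%:Z * M%:Z + sk%:Z) = ((qk * M + sk)%N : nat)%:Z by [].
  done.
- lia.
- lia.
- lia.
- lia.
- exact: bz.
- exact: bz.
- exact: bz.
- by case: (si != 0)%N.
- by case: (sk != 0)%N.
- by case: (sj != 0)%N.
- lia.
Qed.

Theorem lemma2p16 (R : realType) (d : nat) (lam : 'I_d -> nat) (i j : nat) :
  (1 <= d)%N ->
  (forall t, 0 < lam t)%N ->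
  (2 <= nlam lam)%N ->
  (i <= (nlam lam) - 2)%N -> (j <= (nlam lam) - 2)%N -> i != j ->
  (preceq R lam i j <->
   ((i < j)%N /\
    forall t : 'I_d,
      ((s_ lam t i)%:Z + (s_ lam t (j - i))%:Z - (s_ lam t j)%:Z)%:~R
        / ((nlam lam).-1)%:R
      = (ceilq (s_ lam t i) (nlam lam).-1 + ceilq (s_ lam t (j - i)) (nlam lam).-1
         - ceilq (s_ lam t j) (nlam lam).-1)%:~R :> rat)).
Proof.
move=> hd hlam hn hi hj hij.
rewrite /preceq /in_Pi.
set M := (nlam lam).-1.
have hM : (0 < M)%N by rewrite /M; lia.
have hnM : nlam lam = M.+1 by rewrite /M; lia.
set x := fun t => ((pc lam j t - pc lam i t)%:~R : R).
set x0 := ((p0 lam j - p0 lam i)%:~R : R).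
have F1 : \sum_(t < d) x t = x0 + (j%:R - i%:R).
  have I1 : p0 lam j - p0 lam i = \sum_(t < d) (pc lam j t - pc lam i t) - (j%:Z - i%:Z).
    by rewrite /p0 /pc sumrB; ring.
  rewrite /x0 I1 intrB mulrz_sumr intrB.
  by rewrite -!pmulrn subrK.
have F2 : \sum_(t < d) ((lam t)%:R : R) = M%:R + 1.
  by rewrite -natr_sum -/(nlam lam) hnM -addn1 natrD.
have hMR : (0 : R) < M%:R by rewrite ltr0n.
have RE : forall X Y : int, (X%:~R / M%:R = Y%:~R :> rat) <-> X = Y * M%:Z.
  move=> X Y; have hMQ : (M%:R : rat) != 0 by rewrite pnatr_eq0 -lt0n.
  split.
    move=> /(congr1 (fun z => z * M%:R)); rewrite mulfVK //.
    by rewrite -[M%:R]/((M%:Z)%:~R) -intrM => /intr_inj.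
  by move=> ->; rewrite intrM mulfK.
have CM : (M%:R : R) = (M%:Z)%:~R by rewrite pmulrn.
have F3 : forall t, (i < j)%N -> x t - (j%:R - i%:R) / M%:R * (lam t)%:R =
   (M%:Z * (pc lam j t - pc lam i t) - ((j - i)%N : nat)%:Z * (lam t)%:Z)%:~R / M%:R.
  move=> t hlt; rewrite intrB !intrM -CM -!pmulrn natrB 1?ltnW //.
  rewrite /x; field; by rewrite lt0r_neq0.
have B01 : forall G : int, (0 <= (G%:~R : R) / M%:R < 1) <-> (0 <= G < M%:Z).
  move=> G; rewrite ler_pdivlMr // ltr_pdivrMr // mul0r mul1r CM ler0z ltr_int.
  by [].
have PT : forall t, (i < j)%N ->
   (0 <= M%:Z * (pc lam j t - pc lam i t) - ((j - i)%N : nat)%:Z * (lam t)%:Z < M%:Z) <->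
   ((s_ lam t i)%:Z + (s_ lam t (j - i))%:Z - (s_ lam t j)%:Z
     = (ceilq (s_ lam t i) M + ceilq (s_ lam t (j - i)) M - ceilq (s_ lam t j) M) * M%:Z).
  move=> t hlt; exact: pert.
split.
- case=> gam [g [hgam [hg [hx0 hx]]]].
  have hg' : forall t, gam t = x t - g * (lam t)%:R by move=> t; rewrite /x; move: (hx t) => /= ->; rewrite addrK.
  have hs : \sum_(t < d) gam t = \sum_(t < d) x t - g * (M%:R + 1).
    rewrite (eq_bigr _ (fun t _ => hg' t)) sumrB -mulr_sumr F2 //.
  rewrite hs F1 in hx0.
  have hgM : g = (j%:R - i%:R) / M%:R.
    apply: (canRL (mulfK _)); first by rewrite lt0r_neq0.
    rewrite mulrDr mulr1 in hx0.
    rewrite opprD addrA subrK -addrA -{1}[x0]addr0 in hx0.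
    move/addrI: hx0 => /esym/eqP; rewrite subr_eq0 => /eqP ->.
    done.
  have hlt : (i < j)%N.
    rewrite ltn_neqAle hij /= -(ler_nat R) -subr_ge0.
    move: hg; rewrite hgM => /andP[+ _].
    by rewrite pmulr_lge0 // invr_gt0.
  split => // t.
  apply/RE; apply/PT => //; apply/B01.
  by rewrite -F3 // -hgM -hg'.
- case=> hlt ht.
  exists (fun t => x t - (j%:R - i%:R) / M%:R * (lam t)%:R), ((j%:R - i%:R) / M%:R).
  split; last split; last split.
  + move=> t; rewrite F3 //; apply/B01/PT => //; apply/RE; exact: ht.
  + apply/andP; split.
      apply: divr_ge0; last exact: ltW.
      by rewrite subr_ge0 ler_nat ltnW.
    rewrite (ltr_pdivrMr _ _ hMR) mul1r.
    rewrite -(natrB R (ltnW hlt)) ltr_nat.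
    move: hj hM; rewrite hnM; move: (M) (j) (i) => m a b; lia.
  + rewrite sumrB -mulr_sumr F2.
    have : \sum_(t < d) x t = x0 + (j%:R - i%:R) by exact: F1.
    set S := \sum_(t < d) x t => ->.
    field; by rewrite lt0r_neq0.
  + by move=> t; rewrite subrK.
Qed.
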